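(* Let $f_1,\dots,f_p$ be analytic on an open disk centered at $0$, $A_1,\dots,A_p\in\mathbb{C}^{n\times n}$, $k\ge1$, and $W\in\mathbb{C}^{n\times(k+1)}$. Let $Z=\sum_{m=1}^pA_mW(G_{k+1}\circ F_m)$, where $G_{k+1}$ and $F_m$ are as in the context. Let $1\le q\le k+1$ and let $U,V\in\mathbb{R}^{(k+1)\times q}$, with columns $u_j,v_j$, be factors of a best rank-$q$ approximation $UV^T$ of $G_{k+1}$. Then $$\tilde Z=\sum_{m=1}^pA_m\sum_{j=1}^qW\operatorname{diag}(u_j)F_m\operatorname{diag}(v_j)$$ satisfies $$\|Z-\tilde Z\|_F\le\Big(\sum_{m=1}^p\|A_mW\|_2\,\|F_m\|_F\Big)\sum_{j=q+1}^{k+1}\sigma_j(G_{k+1}),$$ where $\sigma_j(G_{k+1})$ are the singular values of $G_{k+1}$ in decreasing order.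
   Context: $\mathbf{C}=[c_{i,j}]_{i,j\ge1}$ is the infinite matrix determined by $c_{i,1}=1/(i+1)$ ($i\ge1$) and $c_{i-1,j}=\frac{j}{i}c_{i,j-1}$ ($i,j>1$). $G_{k+1}\in\mathbb{R}^{(k+1)\times(k+1)}$ has entries $g_{j,1}=g_{1,j}=1/j$ ($j=1,\dots,k+1$) and $g_{i,j}=c_{i-1,j}/j$ for $i,j\ge2$. $F_m\in\mathbb{C}^{(k+1)\times(k+1)}$ is the Hankel matrix with $(i,j)$ entry $f_m^{(i+j-1)}(0)$. $\circ$ is the Hadamard product; $\operatorname{diag}(u)$ is the diagonal matrix with diagonal $u$. *)

(* Defs.v *)
From mathcomp Require Import all_order.
From mathcomp Require Import all_boot all_algebra.
From mathcomp Require Import all_classical all_reals all_analysis.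
From mathcomp.real_closed Require Import complex.

Set Implicit Arguments.
Unset Strict Implicit.
Unset Printing Implicit Defensive.

Import Order.TTheory GRing.Theory Num.Theory.
Import numFieldNormedType.Exports.
Local Open Scope ring_scope.

Section Defs.
Variable R : realType.

Definition Cx : numFieldType := R[i].

Definition toC (x : R) : Cx := Complex x 0.

Definition cabs2 (z : Cx) : R := (@complex.Re R z) ^+ 2 + (@complex.Im R z) ^+ 2.

Definition frobC m n (M : 'M[Cx]_(m, n)) : R :=
  Num.sqrt (\sum_(i < m) \sum_(j < n) cabs2 (M i j)).
Definition frobR m n (M : 'M[R]_(m, n)) : R :=
  Num.sqrt (\sum_(i < m) \sum_(j < n) M i j ^+ 2).

Definition opnorm2 m n (M : 'M[Cx]_(m, n)) : R :=
  sup [set t : R | exists x : 'cV[Cx]_n, x != 0 /\ t = frobC (M *m x) / frobC x].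

Definition disk0 (r : R) : set Cx := [set z : Cx | cabs2 z < r ^+ 2].

(* f is analytic (= holomorphic, complex differentiable) on the open disk *)
Definition analytic_on_disk (r : R) (f : Cx -> Cx) : Prop :=
  forall z, disk0 r z -> derivable f z 1.

(* the infinite matrix C = [c_{i,j}], 1-indexed:
   c_{i,1} = 1/(i+1),  c_{i,j} = j/(i+1) * c_{i+1,j-1}  (j > 1),
   which is the recursion c_{i-1,j} = (j/i) c_{i,j-1} (i,j > 1). *)
Fixpoint cc (i j : nat) : R :=
  match j with
  | 0 => 0
  | 1 => (i.+1)%:R^-1
  | j'.+1 => j%:R / (i.+1)%:R * cc i.+1 j'
  end.

(* G_{k+1}, 0-indexed: entry (a,b) is g_{a+1,b+1} *)
Definition Gmx (k : nat) : 'M[R]_(k.+1) :=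
  \matrix_(a < k.+1, b < k.+1)
    if (a == 0%N :> nat) then (b.+1)%:R^-1
    else if (b == 0%N :> nat) then (a.+1)%:R^-1
    else cc a b.+1 / (b.+1)%:R.

(* Hankel matrix F, 0-indexed: entry (a,b) is f^{(a+b+1)}(0) *)
Definition Fmx (k : nat) (f : Cx -> Cx) : 'M[Cx]_(k.+1) :=
  \matrix_(a < k.+1, b < k.+1) (derive1n (a + b).+1 f 0).

Definition hadamard m n (M N : 'M[Cx]_(m, n)) : 'M[Cx]_(m, n) :=
  \matrix_(i < m, j < n) (M i j * N i j).

(* s lists the singular values of the square real matrix G in decreasing
   order: they are nonnegative, nonincreasing, and their squares are the
   eigenvalues (with algebraic multiplicity) of G^T G. *)
Definition singular_values n (G : 'M[R]_n) (s : 'I_n -> R) : Prop :=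
  (forall i, 0 <= s i) /\
  (forall i j : 'I_n, (i <= j)%N -> s j <= s i) /\
  char_poly (G^T *m G) = \prod_(i < n) ('X - (s i ^+ 2)%:P).

Definition best_rank_approx m n (q : nat) (G X : 'M[R]_(m, n)) : Prop :=
  (\rank X <= q)%N /\
  forall Y : 'M[R]_(m, n), (\rank Y <= q)%N -> frobR (G - X) <= frobR (G - Y).

End Defs.

(* Main.v *)
Set Warnings "-all".
Require Import Defs.
From mathcomp Require Import all_order.
From mathcomp Require Import all_boot all_algebra.
From mathcomp Require Import all_classical all_reals all_analysis.
From mathcomp.real_closed Require Import complex.
From mathcomp Require Import perm.
From mathcomp Require Import ring lra.
Import Order.TTheory GRing.Theory Num.Theory.
Import numFieldNormedType.Exports.
Local Open Scope ring_scope.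
Section Eig.
Variable R : realType.
Local Notation C := (R[i]).

Lemma real_eig {n} {M : 'M[R]_n} : M^T = M ->
  exists (Q : 'M[R]_n) (d : 'rV[R]_n), Q \in unitmx /\ Q *m M = diag_mx d *m Q.
Proof.
move=> Msym.
pose MC : 'M[C]_n := map_mx (real_complex R) M.
have MCreal : MC \is a mxOver Num.real.
  by apply/mxOverP => i j; rewrite mxE complex_real.
have MCsym : MC \is symmetricmx.
  apply/is_hermitianmxP; rewrite expr0 scale1r.
  rewrite map_mx_id //; apply/matrixP => i j; rewrite !mxE -[in RHS]Msym mxE //.
have MCh : MC \is hermsymmx by apply: realsym_hermsym.
have /orthomx_spectralP MCE := hermitian_normalmx MCh.
set P := spectralmx MC in MCE; set D := spectral_diag MC in MCE.
have Pu : P \in unitmx by apply: spectral_unit.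
have Dreal : D \is a mxOver Num.real by apply: hermitian_spectral_diag_real.
have diagreal : diag_mx D \is a mxOver Num.real.
  apply/mxOverP => i j; rewrite mxE.
  by case: (i == j); rewrite ?mulr1n ?mulr0n ?real0 //; apply: (mxOverP Dreal).
have sim : similar_in unitmx MC (diag_mx D).
  exists P => //; apply/similarP => //.
  by rewrite {1}MCE !mulmxA mulmxV // mul1mx.
have [QC /andP [QCreal QCu] /(similarP QCu) QCE] := real_similar sim MCreal diagreal.
pose Q := map_mx (@complex.Re R) QC.
pose d := map_mx (@complex.Re R) D.
have QE : map_mx (real_complex R) Q = QC.
  by apply/matrixP => i j; rewrite !mxE RRe_real //; apply: (mxOverP QCreal).
have dE : map_mx (real_complex R) (diag_mx d) = diag_mx D.
  apply/matrixP => i j; rewrite !mxE.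
  case: (i == j); rewrite ?mulr1n ?mulr0n //.
  by rewrite RRe_real //; apply: (mxOverP Dreal).
exists Q, d; split.
  move: QCu; rewrite -QE !unitmxE det_map_mx !unitfE.
  by apply: contra => /eqP ->; rewrite rmorph0.
have inj : injective (real_complex R) by move=> x y [].
apply: (map_mx_inj (f := real_complex R)).
by rewrite !map_mxM QE dE.
Qed.
End Eig.
Lemma perm_of_prod {F : fieldType} {n} {f g : 'I_n -> F} :
  \prod_(i<n) ('X - (f i)%:P) = \prod_(i<n) ('X - (g i)%:P) ->
  exists s : 'S_n, forall i, f i = g (s i).
Proof.
move=> E.
have : perm_eq [seq f i | i <- ord_tuple n] [tuple g i | i < n].
  by apply: prod_XsubC_eq; rewrite /= !big_map; exact: E.
case/tuple_permP => s Hs; exists s => i.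
have := congr1 (fun t => nth (f i) t i) Hs.
rewrite /= (nth_map i) ?size_enum_ord // (nth_map i) ?size_enum_ord //.
by rewrite nth_ord_enum tnth_mktuple.
Qed.
Lemma charpoly_diag_sim {F : fieldType} {n} {Q M : 'M[F]_n} {d : 'rV_n} :
  Q \in unitmx -> Q *m M = diag_mx d *m Q ->
  char_poly M = \prod_(i<n) ('X - (d 0 i)%:P).
Proof.
move=> Qu QM.
have ME : M = invmx Q *m diag_mx d *m Q by rewrite -mulmxA -QM mulKmx.
have -> : char_poly M = char_poly (diag_mx d).
  rewrite /char_poly /char_poly_mx ME !map_mxM.
  set Qi := map_mx polyC (invmx Q); set Qp := map_mx polyC Q.
  set Dp := map_mx polyC (diag_mx d).
  have QQ : Qp *m Qi = 1%:M by rewrite -map_mxM mulmxV // map_mx1.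
  have E : Qi *m ('X%:M - Dp) *m Qp = 'X%:M - Qi *m Dp *m Qp.
    rewrite mulmxBr mulmxBl; congr (_ - _).
    by rewrite mul_mx_scalar -scalemxAl -map_mxM mulVmx // map_mx1 scalemx1.
  by rewrite -E !det_mulmx mulrC mulrA -det_mulmx QQ det1 mul1r.
rewrite char_poly_trig ?diag_mx_is_trig //.
by apply: eq_bigr => i _; rewrite mxE eqxx mulr1n.
Qed.

Lemma sumsq_tr {F : comPzRingType} {m n} (X : 'M[F]_(m, n)) :
  \sum_(i < m) \sum_(j < n) X i j ^+ 2 = \tr (X^T *m X).
Proof.
rewrite /mxtrace exchange_big; apply: eq_bigr => j _; rewrite mxE.
by apply: eq_bigr => i _; rewrite mxE expr2.
Qed.

Lemma approx_exists (R : realType) n q (G : 'M[R]_n) (s : 'I_n -> R) :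
  (q <= n)%N -> singular_values G s ->
  exists Y : 'M[R]_n, (\rank Y <= q)%N /\
    \sum_(i < n) \sum_(j < n) (G - Y) i j ^+ 2 = \sum_(j < n | (q <= j)%N) s j ^+ 2.
Proof.
move=> Hq [s_ge0 [s_dec cpE]].
pose M := G^T *m G.
have Msym : M^T = M by rewrite /M trmx_mul trmxK.
have [Q [d [Qu QM]]] := @real_eig R _ _ Msym.
have := charpoly_diag_sim Qu QM; rewrite cpE => /perm_of_prod [sg Hsg].
pose h (j : 'I_q) : 'I_n := sg (widen_ord Hq j).
have h_inj : injective h.
  by move=> a b /perm_inj /(congr1 val) /= ab; apply: val_inj.
pose S : 'M[R]_(q, n) := \matrix_(j, c) (h j == c)%:R.
pose B := S *m Q.
pose dq : 'rV[R]_q := \row_j d 0 (h j).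
have SD : S *m diag_mx d = diag_mx dq *m S.
  apply/matrixP => j c; rewrite mul_mx_diag mul_diag_mx !mxE.
  by case: eqP => [<-|]; rewrite ?mul1r ?mulr1 ?mul0r ?mulr0.
have BM : B *m M = diag_mx dq *m B by rewrite /B -mulmxA QM mulmxA SD mulmxA.
have Bfree : row_free B.
  apply/inj_row_free => w; rewrite /B mulmxA => /(congr1 (mulmx^~ (invmx Q))).
  rewrite mulmxK // mul0mx => wS.
  apply/rowP => j; have := congr1 (fun X : 'M[R]_(1, n) => X 0 (h j)) wS; rewrite !mxE.
  rewrite (bigD1 j) //= big1 ?addr0 ?mxE ?eqxx ?mulr1 //.
  by move=> i ij; rewrite mxE (inj_eq h_inj) (negbTE ij) mulr0.
clearbody B.
have BBu : B *m B^T \in unitmx.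
  rewrite -row_free_unit; apply/inj_row_free => v Hv.
  have vB0 : v *m B = 0.
    have : (v *m B *m (v *m B)^T) 0 0 = 0.
      by rewrite trmx_mul mulmxA -(mulmxA v) Hv mul0mx mxE.
    set vB := v *m B.
    rewrite mxE => /eqP; rewrite psumr_eq0; last first.
      by move=> i _; rewrite [X in _ * X]mxE -expr2 sqr_ge0.
    move=> /allP H; apply/rowP => i; rewrite [RHS]mxE.
    have := H i (mem_index_enum _); rewrite [X in _ * X]mxE -expr2 sqrf_eq0.
    by move=> /implyP/(_ isT)/eqP.
  by apply: (row_free_inj Bfree); rewrite vB0 mul0mx.
pose K := invmx (B *m B^T).
pose P := B^T *m K *m B.
have KT : K^T = K by rewrite /K trmx_inv trmx_mul trmxK.
have KBB : K *m (B *m B^T) = 1%:M by rewrite /K mulVmx.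
have BBK : B *m B^T *m K = 1%:M by rewrite /K mulmxV.
clearbody K.
have PT : P^T = P.
  by rewrite /P !trmx_mul trmxK KT !mulmxA.
have PP : P *m P = P.
  rewrite /P -!mulmxA; congr (_ *m _); rewrite !mulmxA.
  by rewrite -(mulmxA K B) KBB mul1mx.
exists (G *m P); split.
  rewrite /P !mulmxA; apply: (leq_trans (mxrankM_maxr _ _)).
  exact: rank_leq_row.
rewrite sumsq_tr.
have -> : G - G *m P = G *m (1%:M - P) by rewrite mulmxBr mulmx1.
set I1P := 1%:M - P.
have I1PT : I1P^T = I1P by rewrite /I1P linearB /= trmx1 PT.
have I1P2 : I1P *m I1P = I1P.
  by rewrite /I1P mulmxBl mul1mx mulmxBr mulmx1 PP subrr subr0.
have -> : (G *m I1P)^T *m (G *m I1P) = I1P *m (M *m I1P) by rewrite trmx_mul I1PT /M !mulmxA.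
rewrite mxtrace_mulC -mulmxA I1P2.
rewrite /I1P mulmxBr mulmx1 raddfB /=.
have -> : \tr (M *m P) = \tr (diag_mx dq).
  rewrite /P !mulmxA mxtrace_mulC !mulmxA -(mulmxA B G^T) -/M BM.
  by rewrite -(mulmxA _ B) -(mulmxA _ (B *m B^T)) BBK mulmx1.
have -> : \tr M = \tr (diag_mx d).
  have ME : M = invmx Q *m (diag_mx d *m Q) by rewrite -QM mulKmx.
  by rewrite ME mxtrace_mulC mulmxK.
rewrite !mxtrace_diag (reindex_inj (@perm_inj _ sg)) /=.
have -> : \sum_(j < q) dq 0 j = \sum_(j < q) s (widen_ord Hq j) ^+ 2.
  by apply: eq_bigr => j _; rewrite mxE Hsg.
under eq_bigr do rewrite -Hsg.
rewrite (bigID (fun i : 'I_n => (i < q)%N)) /= big_ord_narrow addrC addrK.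
by apply: eq_bigl => i; rewrite -leqNgt.
Qed.
Section Norms.
Variable R : realType.

Lemma cs_sum (I : finType) (a b : I -> R) :
  (\sum_i a i * b i) ^+ 2 <= (\sum_i a i ^+ 2) * (\sum_i b i ^+ 2).
Proof.
set A := \sum_i a i ^+ 2; set B := \sum_i b i ^+ 2; set C := \sum_i a i * b i.
have B0 : 0 <= B by apply: sumr_ge0 => i _; apply: sqr_ge0.
have [Be|Bn] := eqVneq B 0.
  have bi0 : forall i, b i = 0.
    move=> i; apply/eqP; rewrite -sqrf_eq0; apply/eqP.
    by apply: (psumr_eq0P _ Be) => // j _; apply: sqr_ge0.
  have -> : C = 0 by rewrite /C big1 // => i _; rewrite bi0 mulr0.
  by rewrite Be expr0n mulr0.
have Bp : 0 < B by rewrite lt_def Bn B0.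
have E : \sum_i (B * a i - C * b i) ^+ 2 = B * (A * B - C ^+ 2).
  rewrite (eq_bigr (fun i => B ^+ 2 * a i ^+ 2 - (2 * B * C) * (a i * b i)
     + C ^+ 2 * b i ^+ 2)); last by move=> i _; ring.
  rewrite big_split sumrB /= -!mulr_sumr -/A -/B -/C; ring.
have : 0 <= B * (A * B - C ^+ 2).
  by rewrite -E; apply: sumr_ge0 => i _; apply: sqr_ge0.
rewrite pmulr_rge0 // subr_ge0; lra.
Qed.

Lemma mink (I : finType) (a b : I -> R) :
  Num.sqrt (\sum_i (a i + b i) ^+ 2) <=
  Num.sqrt (\sum_i a i ^+ 2) + Num.sqrt (\sum_i b i ^+ 2).
Proof.
set A := \sum_i a i ^+ 2; set B := \sum_i b i ^+ 2; set C := \sum_i a i * b i.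
have A0 : 0 <= A by apply: sumr_ge0 => i _; apply: sqr_ge0.
have B0 : 0 <= B by apply: sumr_ge0 => i _; apply: sqr_ge0.
have S0 : 0 <= Num.sqrt A + Num.sqrt B by rewrite addr_ge0 ?sqrtr_ge0.
rewrite -(ger0_norm S0) -sqrtr_sqr ler_sqrt ?sqr_ge0 //.
have -> : \sum_i (a i + b i) ^+ 2 = A + 2 * C + B.
  rewrite (eq_bigr (fun i => a i ^+ 2 + 2 * (a i * b i) + b i ^+ 2));
    last by move=> i _; ring.
  by rewrite !big_split /= -mulr_sumr.
have CS : C <= Num.sqrt A * Num.sqrt B.
  rewrite -sqrtrM // (le_trans (ler_norm C)) // -sqrtr_sqr ler_sqrt.
    exact: cs_sum.
  by rewrite mulr_ge0.
have := sqr_sqrtr A0; have := sqr_sqrtr B0.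
move: (sqrtr_ge0 A) (sqrtr_ge0 B) => a0 b0 eA eB.
nra.
Qed.

Local Notation C := (Cx R).

Lemma cabs2_ge0 (z : C) : 0 <= cabs2 z.
Proof. by rewrite /cabs2 addr_ge0 ?sqr_ge0. Qed.

Lemma cabs2_eq0 (z : C) : cabs2 z = 0 -> z = 0.
Proof.
case: z => a b; rewrite /cabs2 /= => /eqP; rewrite paddr_eq0 ?sqr_ge0 //.
by rewrite !sqrf_eq0 => /andP [/eqP -> /eqP ->].
Qed.

Lemma cabs2M (y z : C) : cabs2 (y * z) = cabs2 y * cabs2 z.
Proof. by case: y => a b; case: z => c d; rewrite /cabs2 /=; ring. Qed.

Lemma cabs2R (e : R) (z : C) : cabs2 (toC e * z) = e ^+ 2 * cabs2 z.
Proof. by case: z => c d; rewrite /cabs2 /toC /=; ring. Qed.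

Definition cp {m n} (X : 'M[C]_(m, n)) (t : 'I_m * 'I_n * bool) : R :=
  if t.2 then complex.Im (X t.1.1 t.1.2) else complex.Re (X t.1.1 t.1.2).

Lemma frobC_E {m n} (X : 'M[C]_(m, n)) :
  frobC X = Num.sqrt (\sum_t cp X t ^+ 2).
Proof.
rewrite /frobC; congr Num.sqrt.
transitivity (\sum_(p : 'I_m * 'I_n) \sum_(b : bool) cp X (p, b) ^+ 2).
  rewrite pair_big /=; apply: eq_bigr => p _; rewrite big_bool /= /cabs2 addrC.
  by [].
by rewrite pair_big /=; apply: eq_bigr => -[p b] _.
Qed.

Lemma frobC_ge0 {m n} (X : 'M[C]_(m, n)) : 0 <= frobC X.
Proof. exact: sqrtr_ge0. Qed.

Lemma frobC_sq {m n} (X : 'M[C]_(m, n)) :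
  frobC X ^+ 2 = \sum_i \sum_j cabs2 (X i j).
Proof.
by rewrite /frobC sqr_sqrtr // sumr_ge0 // => i _; rewrite sumr_ge0 // => j _; apply: cabs2_ge0.
Qed.

Lemma frobC0 {m n} : frobC (0 : 'M[C]_(m, n)) = 0.
Proof.
rewrite /frobC big1 ?sqrtr0 // => i _; rewrite big1 // => j _.
by rewrite mxE /cabs2 /= expr0n addr0.
Qed.

Lemma frobCD {m n} (X Y : 'M[C]_(m, n)) : frobC (X + Y) <= frobC X + frobC Y.
Proof.
rewrite !frobC_E.
have -> : \sum_t cp (X + Y) t ^+ 2 = \sum_t (cp X t + cp Y t) ^+ 2.
  apply: eq_bigr => -[[i j] b] _; rewrite /cp /= mxE.
  by case: (X i j) => ? ?; case: (Y i j) => ? ?; case: b.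
exact: mink.
Qed.

Lemma frobC_sum (I : finType) {m n} (X : I -> 'M[C]_(m, n)) :
  frobC (\sum_i X i) <= \sum_i frobC (X i).
Proof.
apply: (big_rec2 (fun A y => frobC A <= y)); first by rewrite frobC0.
move=> i A y _ H; exact: (le_trans (frobCD (X i) A) (lerD (lexx _) H)).
Qed.

Lemma frobCZ {m n} (c : C) (X : 'M[C]_(m, n)) :
  frobC (c *: X) = Num.sqrt (cabs2 c) * frobC X.
Proof.
rewrite /frobC -sqrtrM ?cabs2_ge0 //; congr Num.sqrt.
rewrite mulr_sumr; apply: eq_bigr => i _; rewrite mulr_sumr.
by apply: eq_bigr => j _; rewrite mxE cabs2M.
Qed.

Lemma entry_le {m n} (X : 'M[C]_(m, n)) i j : cabs2 (X i j) <= frobC X ^+ 2.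
Proof.
have G0 : forall i', 0 <= \sum_j' cabs2 (X i' j').
  by move=> i'; apply: sumr_ge0 => j' _; apply: cabs2_ge0.
rewrite frobC_sq (bigD1 i) //= (bigD1 j) //= -addrA lerDl addr_ge0 //.
  by apply: sumr_ge0 => j' _; apply: cabs2_ge0.
by apply: sumr_ge0 => i' _; apply: G0.
Qed.

Lemma mulmx_col_sum {m p} (B : 'M[C]_(m, p)) (x : 'cV[C]_p) :
  B *m x = \sum_j x j 0 *: col j B.
Proof.
apply/colP => i; rewrite !mxE summxE; apply: eq_bigr => j _.
by rewrite !mxE mulrC.
Qed.

Lemma frobC_mulcv {m p} (B : 'M[C]_(m, p)) (x : 'cV[C]_p) :
  frobC (B *m x) <= (\sum_j frobC (col j B)) * frobC x.
Proof.
rewrite mulmx_col_sum; apply: (le_trans (frobC_sum _ _)).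
rewrite mulr_suml; apply: ler_sum => j _; rewrite frobCZ mulrC.
apply: ler_wpM2l; first exact: frobC_ge0.
rewrite {1}/frobC ler_sqrt; last first.
  by apply: sumr_ge0 => i _; apply: sumr_ge0 => l _; apply: cabs2_ge0.
by rewrite -frobC_sq; apply: entry_le.
Qed.

Lemma frobC_gt0 {m n} (X : 'M[C]_(m, n)) : X != 0 -> 0 < frobC X.
Proof.
rewrite lt_def frobC_ge0 andbT; apply: contra => /eqP H.
apply/eqP/matrixP => i j; rewrite mxE; apply: cabs2_eq0.
apply/le_anti; rewrite cabs2_ge0 andbT.
by have := entry_le X i j; rewrite H expr0n.
Qed.

Lemma opnorm_ub {m p} (B : 'M[C]_(m, p)) :
  has_ubound [set t : R | exists x : 'cV[C]_p, x != 0 /\ t = frobC (B *m x) / frobC x].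
Proof.
exists (\sum_j frobC (col j B)) => t [x [xn ->]].
by rewrite ler_pdivrMr ?frobC_gt0 //; apply: frobC_mulcv.
Qed.

Lemma opnorm_le {m p} (B : 'M[C]_(m, p)) (x : 'cV[C]_p) :
  frobC (B *m x) <= opnorm2 B * frobC x.
Proof.
have [->|xn] := eqVneq x 0; first by rewrite mulmx0 !frobC0 mulr0.
have : frobC (B *m x) / frobC x <= opnorm2 B.
  by apply: (ub_le_sup (opnorm_ub B)); exists x.
by rewrite ler_pdivrMr ?frobC_gt0.
Qed.

Lemma opnorm_ge0 {m p} (B : 'M[C]_(m, p)) : (0 < p)%N -> 0 <= opnorm2 B.
Proof.
move=> p0; pose x : 'cV[C]_p := const_mx 1.
have xn : x != 0.
  apply/eqP => /matrixP /(_ (Ordinal p0) 0); rewrite !mxE => /eqP.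
  by rewrite oner_eq0.
have H : frobC (B *m x) / frobC x <= opnorm2 B.
  by apply: (ub_le_sup (opnorm_ub B)); exists x.
by apply: le_trans H; rewrite divr_ge0 ?frobC_ge0.
Qed.

Lemma frobC_mulmx {m p c} (B : 'M[C]_(m, p)) (H : 'M[C]_(p, c)) : (0 < p)%N ->
  frobC (B *m H) <= opnorm2 B * frobC H.
Proof.
move=> p0; have op0 := opnorm_ge0 B p0.
rewrite -[X in _ <= X]ger0_norm ?mulr_ge0 ?frobC_ge0 // -sqrtr_sqr {1}/frobC.
rewrite ler_sqrt ?sqr_ge0 // exprMn frobC_sq [X in X <= _]exchange_big /=.
rewrite [X in _ <= _ * X]exchange_big /= mulr_sumr; apply: ler_sum => l _.
have E1 : \sum_i cabs2 ((B *m H) i l) = frobC (B *m col l H) ^+ 2.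
  rewrite frobC_sq; apply: eq_bigr => i _; rewrite big_ord1 !mxE.
  by congr cabs2; apply: eq_bigr => j _; rewrite mxE.
have E2 : \sum_i cabs2 (H i l) = frobC (col l H) ^+ 2.
  by rewrite frobC_sq; apply: eq_bigr => i _; rewrite big_ord1 mxE.
rewrite E1 E2 -exprMn !expr2.
by apply: ler_pM; rewrite ?frobC_ge0 ?opnorm_le.
Qed.

Lemma frobC_had {m n} (E : 'M[R]_(m, n)) (F : 'M[C]_(m, n)) (c : R) :
  0 <= c -> (forall i j, E i j ^+ 2 <= c ^+ 2) ->
  frobC (hadamard (map_mx (@toC R) E) F) <= c * frobC F.
Proof.
move=> c0 Ec.
rewrite -[X in X * _]ger0_norm // -sqrtr_sqr /frobC -sqrtrM ?sqr_ge0 //.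
rewrite ler_sqrt; last first.
  by rewrite mulr_ge0 ?sqr_ge0 // sumr_ge0 // => i _; rewrite sumr_ge0 // => j _; apply: cabs2_ge0.
rewrite mulr_sumr; apply: ler_sum => i _; rewrite mulr_sumr; apply: ler_sum => j _.
by rewrite !mxE cabs2R ler_wpM2r ?cabs2_ge0.
Qed.

End Norms.

Lemma sumsq_le (R : realType) (I : finType) (P : pred I) (f : I -> R) :
  (forall i, P i -> 0 <= f i) ->
  \sum_(i | P i) f i ^+ 2 <= (\sum_(i | P i) f i) ^+ 2.
Proof.
move=> f0.
suff : \sum_(i | P i) f i ^+ 2 <= (\sum_(i | P i) f i) ^+ 2 /\ 0 <= \sum_(i | P i) f i.
  by case.
apply: (big_rec2 (fun a b => a <= b ^+ 2 /\ 0 <= b)); first by rewrite expr0n.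
move=> i a b Pi [ab b0]; have fi := f0 i Pi; split; last exact: addr_ge0.
have : 0 <= f i * b by apply: mulr_ge0.
move: ab; nra.
Qed.

Lemma had_split (R : realType) k q (U V : 'M[R]_(k.+1, q)) (F : 'M[Cx R]_k.+1) :
  \sum_(j < q) (diag_mx (map_mx (@toC R) (col j U)^T) *m F
                      *m diag_mx (map_mx (@toC R) (col j V)^T))
  = hadamard (map_mx (@toC R) (U *m V^T)) F.
Proof.
apply/matrixP => a b; rewrite summxE !mxE.
have tc : forall x, toC x = real_complex R x by [].
rewrite tc (rmorph_sum (real_complex R)) mulr_suml; apply: eq_bigr => j _.
rewrite mul_mx_diag mul_diag_mx !mxE rmorphM /= !tc; ring.
Qed.

Theorem theorem6 (R : realType) (n p k q : nat) (r : R)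
  (f : 'I_p -> Cx R -> Cx R) (A : 'I_p -> 'M[Cx R]_n) (W : 'M[Cx R]_(n, k.+1))
  (U V : 'M[R]_(k.+1, q)) (s : 'I_(k.+1) -> R) :
  0 < r ->
  (forall m, analytic_on_disk r (f m)) ->
  (1 <= k)%N ->
  (1 <= q)%N -> (q <= k.+1)%N ->
  best_rank_approx q (Gmx R k) (U *m V^T) ->
  singular_values (Gmx R k) s ->
  let Z := \sum_(m < p) A m *m W *m hadamard (map_mx (@toC R) (Gmx R k)) (Fmx k (f m)) in
  let Zt := \sum_(m < p) A m *m
      \sum_(j < q) (W *m diag_mx (map_mx (@toC R) (col j U)^T) *m Fmx k (f m)
                      *m diag_mx (map_mx (@toC R) (col j V)^T)) in
  frobC (Z - Zt) <=
    (\sum_(m < p) opnorm2 (A m *m W) * frobC (Fmx k (f m)))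
    * \sum_(j < k.+1 | (q <= j)%N) s j.
Proof.
move=> _ _ _ _ qk [_ best] sv; cbv zeta.
set c := \sum_(j < k.+1 | (q <= j)%N) s j.
have c0 : 0 <= c by apply: sumr_ge0 => j _; case: sv => s0 _; apply: s0.
set E := Gmx R k - U *m V^T.
have Ec : forall a b, E a b ^+ 2 <= c ^+ 2.
  move=> a b.
  have [Y [rY eY]] := @approx_exists R _ _ _ _ qk sv.
  have S0 : forall (X : 'M[R]_k.+1), 0 <= \sum_i \sum_j X i j ^+ 2.
    by move=> X; apply: sumr_ge0 => i _; apply: sumr_ge0 => j _; apply: sqr_ge0.
  have h1 : \sum_i \sum_j E i j ^+ 2 <= \sum_i \sum_j (Gmx R k - Y) i j ^+ 2.
    by rewrite -ler_sqrt ?S0 //; apply: best.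
  have h2 : E a b ^+ 2 <= \sum_i \sum_j E i j ^+ 2.
    rewrite (bigD1 a) //= (bigD1 b) //= -addrA lerDl addr_ge0 //.
      by apply: sumr_ge0 => j _; apply: sqr_ge0.
    by apply: sumr_ge0 => i _; apply: sumr_ge0 => j _; apply: sqr_ge0.
  apply: (le_trans h2); apply: (le_trans h1); rewrite eY.
  by apply: sumsq_le => j _; case: sv => s0 _; apply: s0.
have ZE : forall m : 'I_p, A m *m W *m hadamard (map_mx (@toC R) (Gmx R k)) (Fmx k (f m))
   - A m *m \sum_(j < q) (W *m diag_mx (map_mx (@toC R) (col j U)^T) *m Fmx k (f m)
                      *m diag_mx (map_mx (@toC R) (col j V)^T))
   = (A m *m W) *m hadamard (map_mx (@toC R) E) (Fmx k (f m)).
  move=> m.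
  have -> : \sum_(j < q) (W *m diag_mx (map_mx (@toC R) (col j U)^T) *m Fmx k (f m)
                      *m diag_mx (map_mx (@toC R) (col j V)^T))
      = W *m hadamard (map_mx (@toC R) (U *m V^T)) (Fmx k (f m)).
    rewrite -had_split mulmx_sumr; apply: eq_bigr => j _; by rewrite !mulmxA.
  rewrite mulmxA -mulmxBr; congr (_ *m _).
  apply/matrixP => a b; rewrite !mxE.
  have tc : forall x, toC x = real_complex R x by [].
  by rewrite !tc rmorphB mulrBl.
rewrite -sumrB (eq_bigr _ (fun m _ => ZE m)); apply: (le_trans (frobC_sum _ _ _)).
rewrite mulr_suml; apply: ler_sum => m _.
apply: (le_trans (frobC_mulmx _ _ _ _)) => //.
rewrite -mulrA; apply: ler_wpM2l; first exact: opnorm_ge0.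
by rewrite mulrC; apply: frobC_had.
Qed.
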